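(* For $n\geq 4$, let $A_n$ be the split graph with stable set $S=\{s_1,\dots,s_n\}$, central clique $K=\{v_{ij}:1\le i<j\le n\}$, and $N(v_{ij})\cap S=\{s_i,s_j\}$ for all $1\le i<j\le n$. Then $A_n\in SVS$, the branch graph $B(A_n/K)$ is the complete graph on $\{s_1,\dots,s_n\}$, and $A_n\in[n,2,1]\setminus[n-1,2,1]$.
   Context: A graph is split if its vertex set partitions into a stable set $S$ and a clique $K$ (central clique). For $n\geq 4$, the $n$-sun $S_n$ is the split graph with stable set $\{s_1,\dots,s_n\}$, central clique $\{v_1,\dots,v_n\}$, $N(s_i)=\{v_i,v_{i+1}\}$ for $1\le i\le n-1$ and $N(s_n)=\{v_n,v_1\}$. A split graph $G$ with partition $(S,K)$ belongs to $SVS$ if: $G$ is VPT (a vertex-intersection graph of paths in a tree); every $v\in K$ satisfies $|N(v)\cap S|\le 2$; and whenever $S_k$ with $k=4$ or $k$ odd, $k\ge 5$, is an induced subgraph of $G$, some $v\in K$ is adjacent to two non-consecutive vertices of the stable set of that $S_k$. $[h,2,1]$ is the class of vertex-intersection graphs of paths in a tree of maximum degree at most $h$. For a clique $C$ of $G$, the branch graph $B(G/C)$ has vertex set the vertices of $V(G)\setminus C$ adjacent to some vertex of $C$, two such vertices $v,w$ being adjacent iff (1) $vw\notin E(G)$; (2) some vertex of $C$ is adjacent to both; (3) there exist $v',w'\in C$ with $v'$ adjacent to $v$ but not $w$, and $w'$ adjacent to $w$ but not $v$. *)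

(* Defs.v *)
From mathcomp Require Import all_boot.
Set Implicit Arguments. Unset Strict Implicit. Unset Printing Implicit Defensive.

Definition simple_graph (V : finType) (adj : rel V) :=
  symmetric adj /\ irreflexive adj.

Definition stable_set (V : finType) (adj : rel V) (S : {set V}) :=
  forall u v, u \in S -> v \in S -> ~~ adj u v.

Definition clique (V : finType) (adj : rel V) (K : {set V}) :=
  forall u v, u \in K -> v \in K -> u != v -> adj u v.

Definition split_partition (V : finType) (adj : rel V) (S K : {set V}) :=
  [/\ S :&: K = set0, S :|: K = [set: V], stable_set adj S & clique adj K].

Definition is_tree (W : finType) (t : rel W) :=
  [/\ simple_graph t,
      (forall x y : W, connect t x y) &
      (forall c : seq W, 3 <= size c -> ~~ ucycleb t c)].

Definition is_tree_path (W : finType) (t : rel W) (P : {set W}) :=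
  exists (x : W) (p : seq W), [/\ path t x p, uniq (x :: p) & P = [set y | y \in x :: p]].

Definition max_degree_le (W : finType) (t : rel W) (h : nat) :=
  forall x : W, #|[set y | t x y]| <= h.

Definition path_model (V W : finType) (adj : rel V) (t : rel W) (P : V -> {set W}) :=
  (forall v, is_tree_path t (P v)) /\
  (forall u v, u != v -> adj u v = (P u :&: P v != set0)).

Definition VPT (V : finType) (adj : rel V) :=
  exists (W : finType) (t : rel W) (P : V -> {set W}),
    is_tree t /\ path_model adj t P.

Definition h21 (h : nat) (V : finType) (adj : rel V) :=
  exists (W : finType) (t : rel W) (P : V -> {set W}),
    [/\ is_tree t, max_degree_le t h & path_model adj t P].

(** The k-sun S_k (indices 0..k-1): inl i = s_i, inr i = v_i;
    N(s_i) = {v_i, v_(i+1 mod k)}, the v_i form a clique. *)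
Definition sun_adj (k : nat) (x y : 'I_k + 'I_k) : bool :=
  match x, y with
  | inl _, inl _ => false
  | inr i, inr j => i != j
  | inl i, inr j => (val j == val i) || (val j == (val i).+1 %% k)
  | inr j, inl i => (val j == val i) || (val j == (val i).+1 %% k)
  end.

Definition sun_nonconsec (k : nat) (i j : 'I_k) : bool :=
  [&& i != j, val j != (val i).+1 %% k & val i != (val j).+1 %% k].

Definition induced_sun (V : finType) (adj : rel V) (k : nat) (f : 'I_k + 'I_k -> V) :=
  injective f /\ (forall x y, x != y -> adj (f x) (f y) = sun_adj x y).

Definition SVS (V : finType) (adj : rel V) (S K : {set V}) :=
  [/\ simple_graph adj, split_partition adj S K, VPT adj,
      (forall v, v \in K -> #|[set s in S | adj v s]| <= 2) &
      (forall (k : nat), (k == 4) || (odd k && (5 <= k)) ->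
        forall f : 'I_k + 'I_k -> V, induced_sun adj f ->
        exists v, v \in K /\ exists i j : 'I_k,
          [/\ sun_nonconsec i j, adj v (f (inl i)) & adj v (f (inl j))])].

Definition branch_vertices (V : finType) (adj : rel V) (C : {set V}) : {set V} :=
  [set v | (v \notin C) && [exists c in C, adj c v]].

Definition branch_adj (V : finType) (adj : rel V) (C : {set V}) (v w : V) : bool :=
  [&& ~~ adj v w,
      [exists c in C, adj c v && adj c w],
      [exists v' in C, adj v' v && ~~ adj v' w] &
      [exists w' in C, adj w' w && ~~ adj w' v]].

(** The graph A_n (indices 0..n-1): inl i = s_i, inr (i,j) = v_ij with i<j. *)
Definition An_V (n : nat) : finType :=
  ('I_n + {p : 'I_n * 'I_n | p.1 < p.2})%type.

Definition An_adj (n : nat) (x y : An_V n) : bool :=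
  match x, y with
  | inl _, inl _ => false
  | inr p, inr q => p != q
  | inl i, inr p => (i == (val p).1) || (i == (val p).2)
  | inr p, inl i => (i == (val p).1) || (i == (val p).2)
  end.

Definition An_S (n : nat) : {set An_V n} :=
  [set x | if x is inl _ then true else false].

Definition An_K (n : nat) : {set An_V n} :=
  [set x | if x is inr _ then true else false].

(* Main.v *)
Require Import Defs.
From mathcomp Require Import all_boot.
Set Implicit Arguments. Unset Strict Implicit. Unset Printing Implicit Defensive.

Section Tree.
Variables (W : finType) (t : rel W).
Hypothesis Ht : is_tree t.

Lemma tsym : symmetric t. Proof. by case: Ht => [[]]. Qed.
Lemma tirr : irreflexive t. Proof. by case: Ht => [[]]. Qed.

Lemma pcons (x y : W) p : path t x (y :: p) = t x y && path t y p.
Proof. by []. Qed.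

Lemma path_uniqueness p : forall x q, path t x p -> uniq (x :: p) ->
  path t x q -> uniq (x :: q) -> last x p = last x q -> p = q.
Proof.
elim: p => [|a p IH] x q.
  case: q => [//|b q] _ _ _ /= /andP[xq _] E.
  by move: (mem_last b q); rewrite -E (negbTE xq).
case: q => [|b q].
  move=> /= _ /andP[xp _] _ _ E.
  by move: (mem_last a p); rewrite /= E (negbTE xp).
rewrite !pcons => /andP[txa pa] Up /andP[txb pb] Uq /= E.
have [eab|ab] := eqVneq a b.
  subst b; congr cons; apply: (IH a) => //.
  - by move: Up; rewrite [uniq (x :: _)]/= => /andP[].
  - by move: Uq; rewrite [uniq (x :: _)]/= => /andP[].
case: (boolP (a \in q)) => aq.
  exfalso; case/splitPr: aq pb Uq => q1 q2 pb Uq.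
  case: Ht => _ _ /(_ (x :: b :: q1 ++ [:: a])) H.
  move: H; rewrite /= size_cat addn1 => /(_ isT).
  have U : uniq (x :: b :: q1 ++ [:: a]).
    apply: subseq_uniq Uq.
    by rewrite -!cat_cons cat_subseq // sub1seq mem_head.
  move: pb; rewrite cat_path /= => /andP[pq1 /andP[la _]].
  rewrite /ucycleb U andbT => /negP; apply.
  rewrite /= txb rcons_cat cat_path pq1 /= la tsym txa.
  done.
exfalso.
have H : p = x :: b :: q.
  apply: (IH a) => //=; first by case/andP: Up.
  - by rewrite tsym txa txb.
  - move: Up Uq => /= /andP[]; rewrite inE negb_or => /andP[xa _] _ -> .
    by rewrite andbT !in_cons !negb_or eq_sym xa ab aq.
move: Up; rewrite H /= !inE eqxx orbT /=.
by [].
Qed.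

Lemma tsym' x y : t x y -> t y x. Proof. by rewrite tsym. Qed.

Variable r : W.

Lemma rp_ex y : exists p, [&& path t r p, uniq (r :: p) & last r p == y].
Proof.
case: Ht => _ /(_ r y) /connectP [p pp ->] _.
case: (shortenP pp) => p' pp' up' _; exists p'.
by rewrite pp' up' eqxx.
Qed.

Definition rp y := xchoose (rp_ex y).

Lemma rpP y : [/\ path t r (rp y), uniq (r :: rp y) & last r (rp y) = y].
Proof. by case/and3P: (xchooseP (rp_ex y)) => -> -> /eqP. Qed.

Lemma rp_uniq y p : path t r p -> uniq (r :: p) -> last r p = y -> rp y = p.
Proof.
move=> pp up ly; case: (rpP y) => p1 u1 l1.
by apply: (path_uniqueness p1 u1 pp up); rewrite l1 ly.
Qed.

Lemma rp_inj x y : rp x = rp y -> x = y.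
Proof. by move=> E; case: (rpP x) => _ _ <-; case: (rpP y) => _ _ <-; rewrite E. Qed.

Lemma rp_r : rp r = [::].
Proof. by apply: rp_uniq. Qed.

Lemma uniq_catl (s1 s2 : seq W) : uniq (s1 ++ s2) -> uniq s1.
Proof. by rewrite cat_uniq => /and3P[]. Qed.
Lemma uniq_catr (s1 s2 : seq W) : uniq (s1 ++ s2) -> uniq s2.
Proof. by rewrite cat_uniq => /and3P[]. Qed.

Lemma rp_pre s1 s2 y : rp y = s1 ++ s2 -> rp (last r s1) = s1.
Proof.
move=> E; case: (rpP y); rewrite E cat_path => /andP[p1 _] U _.
apply: rp_uniq => //.
by move: U; rewrite -cat_cons => /uniq_catl.
Qed.

Definition down y z := rp z == rcons (rp y) z.

Lemma edge y z : t y z -> down y z || down z y.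
Proof.
move=> tyz; case: (rpP y) => py uy ly.
case: (boolP (z \in r :: rp y)) => zin; last first.
  apply/orP; left; apply/eqP; apply: rp_uniq.
  - by rewrite rcons_path py ly.
  - by rewrite -rcons_cons rcons_uniq zin uy.
  - by rewrite last_rcons.
move: zin; rewrite in_cons => /orP[/eqP zr|zin].
  subst z; apply/orP; right; rewrite /down rp_r /=.
  apply/eqP; apply: rp_uniq => //=; first by rewrite (tsym' tyz).
  by rewrite inE andbT; apply/eqP => ry; move: tyz; rewrite ry tirr.
apply/orP; right.
have [s1 [s2 E]] : exists s1 s2, rp y = s1 ++ z :: s2.
  by case/splitPr: zin => s1 s2; exists s1, s2.
have Ez : rp z = rcons s1 z.
  by have := rp_pre (s1 := rcons s1 z) (s2 := s2) (y := y); rewrite last_rcons cat_rcons; apply.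
have Es2 : s2 = [:: y].
  move: py uy ly; rewrite E cat_path => /andP[_ /= /andP[_ pz]] /= /andP[_ /uniq_catr U2] L.
  apply: (path_uniqueness pz U2) => /=.
  - by rewrite (tsym' tyz).
  - by rewrite inE andbT; apply/eqP => ry; move: tyz; rewrite ry tirr.
  - by move: L; rewrite last_cat.
by rewrite /down E Ez Es2 -!cats1 -catA.
Qed.

Definition dpath m s := path down m s.

Lemma head_rev (m : W) a b : head m (rev a ++ m :: b) = last m a.
Proof. by case/lastP: a => [|a w] //; rewrite rev_rcons last_rcons. Qed.

Lemma decomp q : forall x, path t x q -> uniq (x :: q) ->
  exists m a b, [/\ x :: q = rev a ++ m :: b, dpath m a & dpath m b].
Proof.
elim: q => [|y q IH] x.
  by move=> _ _; exists x, [::], [::].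
rewrite pcons => /andP[txy pq] /= /andP[xn U].
have [m [a [b [E da db]]]] := IH y pq U.
case/orP: (edge txy) => [dxy|dyx].
  case/lastP: a E da => [|a0 w] E da.
    move: E => /= -[ey eq]; subst y q; exists x, [::], (m :: b); split => //.
    by rewrite /dpath /= dxy.
  exfalso.
  move: E; rewrite rev_rcons => -[ew E]; subst w.
  move: da; rewrite /dpath rcons_path => /andP[_ du].
  move: du dxy; rewrite /down => /eqP -> /eqP /rcons_inj [] /rp_inj ux.
  have xq : x \in q.
    rewrite E mem_cat mem_rev in_cons; move: (mem_last m a0); rewrite ux in_cons.
    by case/orP => ->; rewrite ?orbT.
  by move: xn; rewrite in_cons xq orbT.
exists m, (rcons a x), b; split => //.
- by rewrite rev_rcons /= E.
- rewrite /dpath rcons_path; move: da; rewrite /dpath => -> /=.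
  by have := head_rev m a b; rewrite -E /= => <-.
Qed.

Lemma dmem s : forall m w, dpath m s -> w \in m :: s -> exists j, rp w = rp m ++ take j s.
Proof.
elim: s => [|z s IH] m w.
  by move=> _; rewrite inE => /eqP ->; exists 0; rewrite cats0.
rewrite /dpath /= => /andP[/eqP dz ds]; rewrite in_cons => /orP[/eqP ->|wz].
  by exists 0; rewrite take0 cats0.
have [j Ej] := IH z w ds wz.
by exists j.+1; rewrite Ej dz /= cat_rcons.
Qed.

Lemma dmemR s : forall m u j, dpath m s -> rp u = rp m ++ take j s -> u \in m :: s.
Proof.
elim: s => [|z s IH] m u j.
  by move=> _; rewrite cats0 => /rp_inj ->; rewrite mem_head.
rewrite /dpath /= => /andP[/eqP dz ds].
case: j => [|j]; first by rewrite take0 cats0 => /rp_inj ->; rewrite mem_head.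
rewrite /= -cat_rcons -dz => /(IH z u j ds) H.
by rewrite in_cons H orbT.
Qed.

Lemma cat_cmp (l1 s1 l2 s2 : seq W) : l1 ++ s1 = l2 ++ s2 -> size l2 <= size l1 ->
  exists s3, l1 = l2 ++ s3.
Proof.
move=> E le; exists (drop (size l2) l1).
have : take (size l2) (l1 ++ s1) = l2 by rewrite E take_size_cat.
by rewrite takel_cat // => {1}<-; rewrite cat_take_drop.
Qed.

Lemma catsI (s a b : seq W) : s ++ a = s ++ b -> a = b.
Proof. by elim: s => //= x s IH [] /IH. Qed.

Definition inQ (m : W) a b w := (w \in m :: a) || (w \in m :: b).

Lemma Conv m a b u w s s' : dpath m a -> dpath m b -> inQ m a b w ->
  rp u = rp m ++ s -> rp w = rp u ++ s' -> inQ m a b u.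
Proof.
move=> da db /orP[] wi Eu Ew.
  have [j Ej] := dmem da wi.
  have : take (size s) (take j a) = s.
    by move: Ej; rewrite Ew Eu -catA => /catsI <-; rewrite take_size_cat.
  rewrite -take_min => Es.
  by apply/orP; left; apply: (dmemR (j := minn (size s) j) da); rewrite Es.
have [j Ej] := dmem db wi.
have : take (size s) (take j b) = s.
  by move: Ej; rewrite Ew Eu -catA => /catsI <-; rewrite take_size_cat.
rewrite -take_min => Es.
by apply/orP; right; apply: (dmemR (j := minn (size s) j) db); rewrite Es.
Qed.

Lemma top_pre m a b w : dpath m a -> dpath m b -> inQ m a b w -> prefix (rp m) (rp w).
Proof.
move=> da db /orP[] wi.
  by have [j ->] := dmem da wi; apply: prefix_prefix.
by have [j ->] := dmem db wi; apply: prefix_prefix.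
Qed.

Lemma Hlem m a b mq w : dpath m a -> dpath m b -> inQ m a b w ->
  prefix (rp mq) (rp w) -> size (rp m) <= size (rp mq) -> inQ m a b mq.
Proof.
move=> da db wi /prefixP[s1 E1] le.
have /prefixP[s2 E2] := top_pre da db wi.
have [s3 E3] := cat_cmp (etrans (esym E1) E2) le.
exact: Conv da db wi E3 E1.
Qed.


Lemma tp_dec (P : {set W}) : is_tree_path t P -> exists m a b,
  [/\ dpath m a, dpath m b, (forall w, (w \in P) = inQ m a b w)
    & (forall u, u \in a -> u \in b -> False)].
Proof.
case=> x [q [pq uq ->]].
have [m [a [b [E da db]]]] := decomp pq uq.
exists m, a, b; split => //.
  move=> w; rewrite inE E mem_cat mem_rev /inQ !in_cons.
  by case: (w == m); case: (w \in a); case: (w \in b).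
move=> u ua ub; move: uq; rewrite E cat_uniq => /and3P[_ /hasP H _]; apply: H.
by exists u; rewrite ?mem_rev // in_cons ub orbT.
Qed.

End Tree.

Lemma meetP (T : finType) (A B : {set T}) :
  (A :&: B != set0) <-> exists z, z \in A /\ z \in B.
Proof.
split; first by case/set0Pn => z; rewrite inE => /andP[za zb]; exists z.
by case=> z [za zb]; apply/set0Pn; exists z; rewrite inE za zb.
Qed.

Arguments meetP {T A B}.

Lemma third n (i j : 'I_n) : 3 <= n -> exists k : 'I_n, k != i /\ k != j.
Proof.
move=> hn; have : 0 < #|~: [set i; j]|.
  have := cardsC [set i; j]; rewrite card_ord => E.
  have h : #|[set i; j]| <= 2 by rewrite cards2; case: (i != j).
  rewrite -(ltn_add2l #|[set i; j]|) addn0 E.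
  exact: leq_ltn_trans h hn.
by case/card_gt0P => k; rewrite !inE negb_or => /andP[ki kj]; exists k.
Qed.

Lemma vij n (i j : 'I_n) : i != j -> exists v : An_V n,
  v \in An_K n /\ forall k, An_adj (inl k) v = (k == i) || (k == j).
Proof.
move=> ij; case: (ltngtP i j) => h.
- by exists (inr (exist (fun p : 'I_n * 'I_n => p.1 < p.2) (i, j) h)); rewrite inE.
- exists (inr (exist (fun p : 'I_n * 'I_n => p.1 < p.2) (j, i) h)); split => [|k].
    by rewrite inE.
  by rewrite /= orbC.
- by move: ij; rewrite (val_inj h) eqxx.
Qed.

Lemma An_sym n : symmetric (@An_adj n).
Proof. by case=> [i|p] [j|q] //=; rewrite eq_sym. Qed.

Lemma exmax (T : finType) (p : pred T) (F : T -> nat) x0 :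
  p x0 -> exists x, p x /\ forall y, p y -> F y <= F x.
Proof. by move=> px0; case: (arg_maxnP F px0) => x px H; exists x. Qed.

Lemma take_ne_head (W : eqType) (x : W) s j : take j s != [::] -> head x (take j s) \in s.
Proof. by case: s => [|y s]; case: j => //= j _; rewrite mem_head. Qed.

Lemma take_ne_head' (W : eqType) (x : W) s j : take j s != [::] -> head x (take j s) = head x s.
Proof. by case: s => [|y s]; case: j. Qed.

Lemma prefix_take (W : eqType) (s : seq W) k : prefix (take k s) s.
Proof. by apply/prefixP; exists (drop k s); rewrite cat_take_drop. Qed.

Lemma take_cmp (W : eqType) (s : seq W) j1 j2 :
  prefix (take j1 s) (take j2 s) || prefix (take j2 s) (take j1 s).
Proof.
case: (leqP j1 j2) => h.
  by rewrite -(take_takel s h) prefix_take.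
by rewrite -(take_takel s (ltnW h)) prefix_take orbT.
Qed.

Lemma An_notlow n (hn : 3 <= n) (W : finType) (t : rel W) (P : An_V n -> {set W}) :
  is_tree t -> path_model (@An_adj n) t P -> exists c, n <= #|[set y | t c y]|.
Proof.
move=> Ht [Pp Pm].
have i0 : 'I_n by exists 0; apply: leq_trans hn.
have [r0 _] : exists r0 : W, True by case: (Pp (inl i0)) => x _; exists x.
pose TopB r v m := (m \in P v) &&
  [forall w, (w \in P v) ==> prefix (rp Ht r m) (rp Ht r w)].
have topE : forall r v, exists m a b,
    [/\ dpath Ht r m a, dpath Ht r m b, (forall w, (w \in P v) = inQ m a b w)
      & (forall u, u \in a -> u \in b -> False)] /\ TopB r v m.
  move=> r v; have [m [a [b [da db Em dis]]]] := tp_dec Ht r (Pp v).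
  exists m, a, b; split => //; rewrite /TopB Em /inQ mem_head /=.
  by apply/forallP => w; apply/implyP; rewrite Em; exact: top_pre da db.
have meetK : forall u v, u \in An_K n -> v \in An_K n -> u != v -> An_adj u v.
  by case=> [i|p] [j|q]; rewrite !inE //= => _ _; apply: contraNN => /eqP ->.
have Kne : forall (u : 'I_n) v, v \in An_K n -> inl u != v.
  by move=> u [j|q]; rewrite !inE.
(* Helly *)
have [k0 [k0i _]] := third i0 i0 hn.
have [v0 [v0K _]] := vij k0i.
have [m0 [_ [_ [_ Tm0]]]] := topE r0 v0.
pose pp := fun pr : An_V n * W => (pr.1 \in An_K n) && TopB r0 pr.1 pr.2.
have px0 : pp (v0, m0) by rewrite /pp /= v0K Tm0.
have [[vs c] [/andP[vsK Tc] cmax]] :=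
  exmax (fun pr : An_V n * W => size (rp Ht r0 pr.2)) px0.
have cK : forall v, v \in An_K n -> c \in P v.
  move=> v vK; have [m [a [b [[da db Em _] Tm]]]] := topE r0 v.
  have [z [zs zv]] : exists z, z \in P vs /\ z \in P v.
    case: (eqVneq v vs) => [->|ne]; first by exists c; case/andP: Tc.
    by apply/meetP; rewrite -Pm ?meetK // eq_sym.
  rewrite Em; apply: (Hlem da db (w := z)); first by rewrite -Em.
    by case/andP: Tc => _ /forallP /(_ z) /implyP; apply.
  by apply: (cmax (v, m)); rewrite /pp /= vK Tm.
have cS : forall i, c \notin P (inl i).
  move=> i; have [j [ji _]] := third i i hn; have [k [ki kj]] := third i j hn.
  have jk : j != k by rewrite eq_sym.
  have [v [vK prof]] := vij jk.
  apply/negP => ci; have := prof i; rewrite eq_sym (negbTE ji) eq_sym (negbTE ki).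
  rewrite Pm ?Kne // => H.
  have : P (inl i) :&: P v != set0 by apply/meetP; exists c; rewrite ci cK.
  by rewrite H.
pose tp i := odflt c [pick m | TopB c (inl i) m].
have tpT : forall i, TopB c (inl i) (tp i).
  move=> i; rewrite /tp; case: pickP => [m Hm //|H]; exfalso.
  by have [m [_ [_ [_ Tm]]]] := topE c (inl i); rewrite H in Tm.
have tpin : forall i, tp i \in P (inl i) by move=> i; case/andP: (tpT i).
have rpne : forall i, rp Ht c (tp i) != [::].
  move=> i; apply/eqP; rewrite -(rp_r Ht c) => /rp_inj E.
  by move: (tpin i); rewrite E (negbTE (cS i)).
pose g i := head c (rp Ht c (tp i)).
have tg : forall i, t c (g i).
  move=> i; case: (rpP Ht c (tp i)) => pth _ _; move: (rpne i) pth; rewrite /g.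
  by case: (rp Ht c (tp i)) => [//|y s] _ /andP[].
have decK : forall v, v \in An_K n -> exists a b,
    [/\ dpath Ht c c a, dpath Ht c c b, (forall w, (w \in P v) = inQ c a b w)
      & (forall u, u \in a -> u \in b -> False)].
  move=> v vK; have [m [a [b [[da db Em dis] _]]]] := topE c v.
  have : prefix (rp Ht c m) (rp Ht c c) by apply: top_pre da db _; rewrite -Em cK.
  rewrite rp_r prefixs0 => /eqP; rewrite -(rp_r Ht c) => /rp_inj E; subst m.
  by exists a, b.
have A : forall u v, v \in An_K n -> An_adj (inl u) v -> tp u \in P v.
  move=> u v vK; rewrite Pm ?Kne // => /meetP [z [zu zv]].
  have [a [b [da db Em _]]] := decK v vK.
  rewrite Em; apply: (Hlem da db (w := z)); first by rewrite -Em.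
    by case/andP: (tpT u) => _ /forallP /(_ z) /implyP; apply.
  by rewrite rp_r.
have C : forall i j k, i != j -> i != k -> j != k ->
    prefix (rp Ht c (tp i)) (rp Ht c (tp j)) -> False.
  move=> i j k ij ik jk /prefixP [s' Es].
  have [v [vK prof]] := vij jk.
  have tjv : tp j \in P v by apply: A => //; rewrite prof eqxx.
  have [a [b [da db Em _]]] := decK v vK.
  have tiv : tp i \in P v.
    rewrite Em; apply: (Conv da db (w := tp j) (s := rp Ht c (tp i)) (s' := s')).
    - by rewrite -Em.
    - by rewrite rp_r.
    - exact: Es.
  have := prof i; rewrite (negbTE ij) (negbTE ik) Pm ?Kne // => H.
  have : P (inl i) :&: P v != set0 by apply/meetP; exists (tp i); rewrite tiv tpin.
  by rewrite H.
have ginj : injective g.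
  move=> i j gij; apply/eqP; apply/negPn/negP => ij.
  have [k [ki kj]] := third i j hn.
  have [v [vK prof]] := vij ij.
  have tiv : tp i \in P v by apply: A => //; rewrite prof eqxx.
  have tjv : tp j \in P v by apply: A => //; rewrite prof eqxx orbT.
  have [a [b [da db Em dis]]] := decK v vK.
  have side : forall w, w \in P v -> exists l, exists2 s, (s = a \/ s = b) & rp Ht c w = take l s.
    move=> w; rewrite Em => /orP[] wi.
      by have [l El] := dmem da wi; exists l, a; [left|rewrite El rp_r].
    by have [l El] := dmem db wi; exists l, b; [right|rewrite El rp_r].
  have [l1 [s1 hs1 E1]] := side _ tiv.
  have [l2 [s2 hs2 E2]] := side _ tjv.
  have ne1 := rpne i; have ne2 := rpne j.
  rewrite E1 in ne1; rewrite E2 in ne2.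
  have ik : i != k by rewrite eq_sym.
  have jk : j != k by rewrite eq_sym.
  have ji : j != i by rewrite eq_sym.
  have same : s1 = s2 -> False.
    move=> es; subst s2.
    case/orP: (take_cmp s1 l1 l2) => H.
      by apply: (C i j k) => //; rewrite E1 E2.
    by apply: (C j i k) => //; rewrite E1 E2.
  have hd1 := take_ne_head c ne1; have hd2 := take_ne_head c ne2.
  move: gij; rewrite /g E1 E2 => gij.
  rewrite gij in hd1.
  case: hs1 => es1; case: hs2 => es2; subst s1 s2 => //.
  - by apply: (dis _ hd1 hd2).
  - by apply: (dis _ hd2 hd1).
exists c.
have E : #|g @: [set: 'I_n]| = n by rewrite card_imset // cardsT card_ord.
rewrite -{1}E; apply: subset_leq_card; apply/subsetP => y /imsetP [i _ ->].
by rewrite inE tg.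
Qed.

Definition star n : rel (option 'I_n) := fun x y => (x == None) (+) (y == None).

Lemma star_tree n : is_tree (@star n).
Proof.
split.
- by split; [move=> x y; rewrite /star addbC | move=> x; rewrite /star addbb].
- move=> x y; apply: (@connect_trans _ (@star n) None).
    by case: x => [x|]; [apply: connect1 | apply: connect0].
  by case: y => [y|]; [apply: connect1 | apply: connect0].
- case=> [|a [|b [|d rest]]] // _.
  rewrite /ucycleb /=; case: a => [a|]; case: b => [b|]; case: d => [d|] //=;
  rewrite ?inE ?andbF //=.
  by case: rest => [|[e|] rest] //=; rewrite ?inE ?andbF ?eqxx ?orbT ?andbF.
Qed.

Definition Pstar n (v : An_V n) : {set option 'I_n} :=
  match v with
  | inl i => [set y | y \in [:: Some i]]
  | inr p => [set y | y \in [:: Some (val p).1; None; Some (val p).2]]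
  end.

Lemma h21_n n : h21 n (@An_adj n).
Proof.
exists (option 'I_n), (@star n), (@Pstar n); split.
- exact: star_tree.
- move=> x; have := cardsC1 x; rewrite card_option card_ord /= => E.
  apply: leq_trans (_ : #|[set~ x]| <= n); last by rewrite E.
  apply: subset_leq_card; apply/subsetP => y; rewrite !inE /star.
  by apply: contraTneq => ->; rewrite addbb.
split.
- case=> [i|p].
    by exists (Some i), [::].
  exists (Some (val p).1), [:: None; Some (val p).2]; split => //.
  rewrite /= !inE /= andbT; apply/eqP => -[] E.
  by move: (valP p); rewrite E ltnn.
case=> [i|p] [j|q] uv.
- apply/esym/negbTE/negP; move/meetP => [z []]; rewrite !inE => /eqP -> /eqP [] eij.
  by move: uv; rewrite eij eqxx.
- apply/idP/idP => [H|/meetP [z []]].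
    apply/meetP; exists (Some i); rewrite !inE.
    by case/orP: H => /eqP <-; rewrite eqxx ?orbT.
  by rewrite !inE => /eqP -> /or3P [] /eqP // [] ->; rewrite eqxx ?orbT.
- apply/idP/idP => [H|/meetP [z []]].
    apply/meetP; exists (Some j); rewrite !inE.
    by case/orP: H => /eqP <-; rewrite eqxx ?orbT.
  rewrite !inE => zp /eqP ez; subst z.
  by move: zp => /or3P [] /eqP // [] ->; rewrite eqxx ?orbT.
- have -> : An_adj (inr p) (inr q) = true.
    by rewrite /=; apply/negP => /eqP E; move: uv; rewrite E eqxx.
  by apply/esym/meetP; exists None; rewrite !inE eqxx !orbT.
Qed.

Lemma An_irr n : irreflexive (@An_adj n).
Proof. by case=> [i|p] //=; rewrite eqxx. Qed.

Lemma prof' n (v : An_V n) i j : (forall k, An_adj (inl k) v = (k == i) || (k == j)) ->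
  forall k, An_adj v (inl k) = (k == i) || (k == j).
Proof. by move=> H k; rewrite An_sym H. Qed.

Lemma sun_ok n k (hk : (k == 4) || (odd k && (5 <= k))) (f : 'I_k + 'I_k -> An_V n) :
  induced_sun (@An_adj n) f -> exists v, v \in An_K n /\ exists i j : 'I_k,
    [/\ sun_nonconsec i j, An_adj v (f (inl i)) & An_adj v (f (inl j))].
Proof.
case=> finj fadj.
have k4 : 4 <= k by case/orP: hk => [/eqP->|/andP[_ h]] //; apply: ltnW.
have inS : forall s c1 c2 : 'I_k, c1 != c2 -> sun_adj (inl s) (inr c1) = false ->
    sun_adj (inl s) (inr c2) = false -> exists a, f (inl s) = inl a.
  move=> s c1 c2 c12 s1 s2.
  case E: (f (inl s)) => [a|p]; first by exists a.
  exfalso.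
  have h1 := fadj (inl s) (inr c1) isT; have h2 := fadj (inl s) (inr c2) isT.
  rewrite E s1 in h1; rewrite E s2 in h2.
  have noK : forall c, An_adj (inr p) (f (inr c)) = false -> exists a, f (inr c) = inl a.
    move=> c; case E': (f (inr c)) => [a|q]; first by exists a.
    move=> /= /negbFE /eqP pq; subst q.
    by have := finj (inl s) (inr c); rewrite E E' => /(_ erefl).
  have [a1 E1] := noK _ h1; have [a2 E2] := noK _ h2.
  have := fadj (inr c1) (inr c2); rewrite E1 E2 /= c12 => /(_ isT).
  done.
pose o0 := Ordinal (leq_trans (isT : 0 < 4) k4).
pose o1 := Ordinal (leq_trans (isT : 1 < 4) k4).
pose o2 := Ordinal (leq_trans (isT : 2 < 4) k4).
pose o3 := Ordinal (leq_trans (isT : 3 < 4) k4).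
have m1 : 1 %% k = 1 by rewrite modn_small // (leq_trans _ k4).
have m3 : 3 %% k = 3 by rewrite modn_small.
have [a Ea] : exists a, f (inl o0) = inl a.
  by apply: (inS _ o2 o3) => //=; rewrite ?m1 ?m3.
have [b Eb] : exists b, f (inl o2) = inl b.
  by apply: (inS _ o0 o1) => //=; rewrite ?m1 ?m3.
have ab : a != b.
  apply/negP => /eqP eab; subst b.
  by have := finj (inl o0) (inl o2); rewrite Ea Eb => /(_ erefl).
have [v [vK prof]] := vij ab.
exists v; split => //; exists o0, o2; split.
- by rewrite /sun_nonconsec /= m1 m3.
- by rewrite Ea (prof' prof) eqxx.
- by rewrite Eb (prof' prof) eqxx orbT.
Qed.

Theorem mainTheorem11 (n : nat) (hn : 4 <= n) :
  [/\ SVS (@An_adj n) (An_S n) (An_K n),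
      branch_vertices (@An_adj n) (An_K n) = An_S n,
      (forall v w, v \in An_S n -> w \in An_S n -> v != w ->
         branch_adj (@An_adj n) (An_K n) v w),
      h21 n (@An_adj n)
    & ~ h21 n.-1 (@An_adj n)].
Proof.
have hn3 : 3 <= n by apply: ltnW.
split.
- split.
  + by split; [exact: An_sym | exact: An_irr].
  + split.
    * by apply/setP => x; rewrite !inE; case: x.
    * by apply/setP => x; rewrite !inE; case: x.
    * by move=> u v; rewrite !inE; case: u => // i; case: v.
    * by move=> u v; rewrite !inE; case: u => // p; case: v => // q _ _ /= ne; apply: contraNN ne => /eqP ->.
  + by case: (h21_n n) => W [t [P [Ht _ Pm]]]; exists W, t, P.
  + case=> [i|p]; rewrite inE // => _.
    apply: leq_trans (_ : #|[set (inl (val p).1 : An_V n); inl (val p).2]| <= 2).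
      apply: subset_leq_card; apply/subsetP => x; rewrite !inE.
      by case: x => // i /= /orP[/eqP ->|/eqP ->]; rewrite eqxx ?orbT.
    by rewrite cards2; case: (_ != _).
  + by move=> k hk f fs; apply: sun_ok.
- apply/setP => x; rewrite !inE; case: x => [i|p] //=.
  have [j [ji _]] := third i i hn3.
  have ij : i != j by rewrite eq_sym.
  have [v [vK prof]] := vij ij.
  by apply/existsP; exists v; rewrite vK (prof' prof) eqxx.
- case=> [i|p] [j|q]; rewrite !inE // => _ _ ne.
  have ij : i != j by apply: contraNN ne => /eqP ->.
  have [k [ki kj]] := third i j hn3.
  have ik : i != k by rewrite eq_sym.
  have jk : j != k by rewrite eq_sym.
  have [v [vK prof]] := vij ij.
  have [v1 [v1K prof1]] := vij ik.
  have [v2 [v2K prof2]] := vij jk.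
  apply/and4P; split => //.
  + by apply/existsP; exists v; rewrite vK !(prof' prof) !eqxx orbT.
  + apply/existsP; exists v1; rewrite v1K !(prof' prof1) eqxx /=.
    by rewrite eq_sym (negbTE ij) eq_sym (negbTE kj).
  + apply/existsP; exists v2; rewrite v2K !(prof' prof2) eqxx /=.
    by rewrite (negbTE ij) (negbTE ik).
- exact: h21_n.
- case=> W [t [P [Ht deg Pm]]].
  have [c hc] := An_notlow hn3 Ht Pm.
  have := leq_trans hc (deg c).
  by rewrite leqNgt ltn_predL (leq_trans _ hn).
Qed.
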